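(* Let $\mathbf{x}=x_1x_2\ldots$ be an infinite word over a finite alphabet. The following statements are equivalent: (i) $\mathbf{x}$ is a Sturmian word; (ii) $r(n,\mathbf{x})\le 2n+1$ for all $n\ge1$, with equality for infinitely many $n$.
   Context: For integers $i\le j$, $x_i^j=x_ix_{i+1}\cdots x_j$. For $n\ge1$, $r(n,\mathbf{x})=\min\{m\ge1:\ x_i^{i+n-1}=x_{m-n+1}^{m}\text{ for some } 1\le i\le m-n\}$. The subword complexity $p(n,\mathbf{x})$ is the number of distinct factors of length $n$ of $\mathbf{x}$; a Sturmian word is an infinite word with $p(n,\mathbf{x})=n+1$ for every $n\ge1$. *)

(* Defs.v *)
From mathcomp Require Import all_boot.
From Stdlib Require Import ClassicalEpsilon.
Set Implicit Arguments. Unset Strict Implicit. Unset Printing Implicit Defensive.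

(* An infinite word x = x_1 x_2 ... over a finite alphabet A is represented
   by w : nat -> A with  x_i = w (i - 1)  (0-based storage). *)

(* fac w j n = the length-n factor of w starting at 0-based position j,
   i.e. x_{j+1}^{j+n}. *)
Definition fac (A : Type) (w : nat -> A) (j n : nat) : seq A :=
  mkseq (fun k => w (j + k)) n.

(* rep_cond w n m : m >= 1 and x_i^{i+n-1} = x_{m-n+1}^m for some 1 <= i <= m-n. *)
Definition rep_cond (A : eqType) (w : nat -> A) (n m : nat) : bool :=
  (0 < m) && has (fun i => fac w i.-1 n == fac w (m - n) n) (iota 1 (m - n)).

(* r(n, x) = min { m >= 1 : rep_cond }  (default 0 if the set is empty,
   which never happens over a finite alphabet). *)
Definition r (A : eqType) (w : nat -> A) (n : nat) : nat :=
  match excluded_middle_informative (exists m, rep_cond w n m) with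
  | left H => ex_minn H
  | right _ => 0
  end.

Definition is_factor (A : Type) (w : nat -> A) (t : seq A) : bool :=
  if excluded_middle_informative (exists j, fac w j (size t) = t) then true else false.

Definition p (A : finType) (w : nat -> A) (n : nat) : nat :=
  #|[set t : n.-tuple A | is_factor w t]|.

Definition sturmian (A : finType) (w : nat -> A) : Prop :=
  forall n, 1 <= n -> p w n = n.+1.

(* Main.v *)
Require Import Defs.
From mathcomp Require Import all_boot.
From mathcomp Require Import zify.
From Stdlib Require Import Classical ClassicalEpsilon.
Set Implicit Arguments. Unset Strict Implicit. Unset Printing Implicit Defensive.

Lemma fac_eqP (A : Type) (w : nat -> A) a b m :
  fac w a m = fac w b m <-> (forall x, x < m -> w (a + x) = w (b + x)).
Proof.
split.
- move=> H x Hx. have := congr1 (fun s => nth (w 0) s x) H. by rewrite /fac !nth_mkseq.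
- move=> H. apply: (@eq_from_nth _ (w 0)); rewrite /fac ?size_mkseq // => x Hx.
  by rewrite !nth_mkseq // H.
Qed.

Definition tup (A : finType) (w : nat -> A) k j : k.-tuple A :=
  insubd [tuple of nseq k (w 0)] (fac w j k).

Lemma val_tup (A : finType) (w : nat -> A) k j : val (tup w k j) = fac w j k.
Proof. by rewrite /tup val_insubd /= size_mkseq eqxx. Qed.

Lemma tup_eq (A : finType) (w : nat -> A) k a b :
  (tup w k a == tup w k b) = (fac w a k == fac w b k).
Proof. by rewrite -val_eqE /= !val_tup. Qed.

Fixpoint Fs (A : finType) (w : nat -> A) n L : {set n.-tuple A} :=
  if L is L'.+1 then tup w n L' |: Fs w n L' else set0.

Lemma mem_Fs (A : finType) (w : nat -> A) n L t :
  t \in Fs w n L <-> exists s, s < L /\ tup w n s = t.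
Proof.
elim: L => [|L IH] /=; first by rewrite in_set0; split => // [[s []]].
rewrite in_setU1; split.
- case/orP => [/eqP ->|/IH [s [Hs <-]]]; first by exists L.
  by exists s; split => //; apply: ltnW.
- move=> [s [Hs Ht]]. move: Hs; rewrite ltnS leq_eqVlt => /orP [/eqP Es|Hs].
  + by rewrite -Ht Es eqxx.
  + by apply/orP; right; apply/IH; exists s.
Qed.

Lemma Fs_sub (A : finType) (w : nat -> A) n L L' : L <= L' -> Fs w n L \subset Fs w n L'.
Proof.
move=> HL; apply/subsetP => t /mem_Fs [s [Hs Ht]]; apply/mem_Fs; exists s; split => //.
exact: leq_trans Hs HL.
Qed.

Lemma card_Fs_add (A : finType) (w : nat -> A) n L d : #|Fs w n (L + d)| <= #|Fs w n L| + d.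
Proof.
elim: d => [|d IH]; first by rewrite !addn0.
rewrite addnS /= cardsU1. case: (tup w n (L + d) \notin _); rewrite ?add1n ?add0n addnS ?ltnS //; exact: leqW.
Qed.

Lemma card_Fs (A : finType) (w : nat -> A) n L : #|Fs w n L| <= L.
Proof. by have := card_Fs_add w n 0 L; rewrite /= cards0. Qed.

Lemma Fs_pigeon (A : finType) (w : nat -> A) n L :
  #|Fs w n L| < L -> exists k j, k < j /\ j < L /\ fac w k n = fac w j n.
Proof.
elim: L => [|L IH] //= H.
case Hin: (tup w n L \in Fs w n L).
- move/mem_Fs: Hin => [s [Hs /eqP]]; rewrite tup_eq => /eqP E.
  by exists s, L.
- move: H; rewrite cardsU1 Hin /= add1n ltnS => /IH [k [j [Hkj [HjL E]]]].
  exists k, j; do !split => //. exact: ltnW.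
Qed.

Lemma Fs_const (A : finType) (w : nat -> A) n m k j :
  k < j -> fac w k m = fac w j m -> n <= m ->
  forall i, i <= m - n + 1 -> Fs w n (j + i) = Fs w n j.
Proof.
move=> Hkj /fac_eqP E Hnm; elim => [|i IH] Hi; first by rewrite addn0.
have Hin : tup w n (j + i) \in Fs w n (j + i).
  apply/mem_Fs; exists (k + i); split; first by lia.
  apply/eqP; rewrite tup_eq; apply/eqP/fac_eqP => x Hx.
  rewrite -!addnA; apply: E; lia.
rewrite addnS /= -IH; last by lia.
apply/setP => t; rewrite in_setU1; apply/idP/idP => [/orP [/eqP ->|//]|->]//.
by rewrite orbT.
Qed.

Lemma is_factorP (A : Type) (w : nat -> A) (t : seq A) :
  is_factor w t <-> exists j, fac w j (size t) = t.
Proof.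
rewrite /is_factor; case: excluded_middle_informative => H; split => // _.
Qed.

Definition Xs (A : finType) (w : nat -> A) k := [set t : k.-tuple A | is_factor w t].

Lemma Xs_tup (A : finType) (w : nat -> A) k j : tup w k j \in Xs w k.
Proof. rewrite inE; apply/is_factorP; exists j; by rewrite size_tuple val_tup. Qed.

Lemma XsP (A : finType) (w : nat -> A) k t : t \in Xs w k -> exists j, t = tup w k j.
Proof.
rewrite inE => /is_factorP [j Hj]; exists j; apply: val_inj => /=.
by rewrite val_tup -Hj size_tuple.
Qed.

Lemma p_Xs (A : finType) (w : nat -> A) k : p w k = #|Xs w k|.
Proof. by []. Qed.

Lemma Fs_Xs (A : finType) (w : nat -> A) n L : Fs w n L \subset Xs w n.
Proof. by apply/subsetP => t /mem_Fs [s [_ <-]]; apply: Xs_tup. Qed.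

Lemma fin_cover (A : finType) (w : nat -> A) n (s : seq (n.-tuple A)) :
  (forall t, t \in s -> exists L, t \in Fs w n L) ->
  exists L, forall t, t \in s -> t \in Fs w n L.
Proof.
elim: s => [|a s IH] H; first by exists 0.
have [L1 H1] := H a (mem_head _ _).
have [L2 H2] : exists L, forall t, t \in s -> t \in Fs w n L.
  by apply: IH => t Ht; apply: H; rewrite inE Ht orbT.
exists (maxn L1 L2) => t; rewrite inE => /orP [/eqP ->|Ht].
- by apply: (subsetP (Fs_sub w n (leq_maxl L1 L2))).
- by apply: (subsetP (Fs_sub w n (leq_maxr L1 L2))); apply: H2.
Qed.

Lemma p_bound (A : finType) (w : nat -> A) n c :
  (forall m, n <= m -> exists j k, j <= m + c /\ k < j /\ fac w k m = fac w j m) ->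
  p w n <= n + c.
Proof.
move=> H.
have inv : forall d j k, j <= n + d + c -> k < j -> fac w k (n + d) = fac w j (n + d) ->
    #|Fs w n j| <= n + c.
  elim => [|d IH] j' k' Hj' Hk' E'.
  - apply: leq_trans (card_Fs _ _ _) _; by rewrite addn0 in Hj'.
  - have [j [k [Hj [Hk E]]]] := H (n + d) (leq_addr _ _).
    have IHj := IH j k Hj Hk E.
    have Cj := card_Fs w n j.
    have FB : Fs w n (j + (d + 1)) = Fs w n j.
      apply: (Fs_const Hk E (leq_addr _ _)); lia.
    have S : Fs w n j' \subset Fs w n (j + (d + 1) + (j' - (j + (d + 1)))).
      apply: Fs_sub; lia.
    have C := card_Fs_add w n (j + (d + 1)) (j' - (j + (d + 1))).
    rewrite FB in C.
    have := subset_leq_card S.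
    move: C IHj Cj. rewrite -/(#|Fs w n j|).
    move: #|Fs w n j| #|Fs w n (j + (d + 1) + (j' - (j + (d + 1))))| #|Fs w n j'| => a b e.
    lia.
have allL : forall L, #|Fs w n L| <= n + c.
  move=> L; have [j [k [Hj [Hk E]]]] := H (L + n) (leq_addl _ _).
  have FB : Fs w n (j + L) = Fs w n j by apply: (Fs_const Hk E (leq_addl _ _)); lia.
  apply: leq_trans (subset_leq_card (Fs_sub w n (leq_addl j L))) _.
  rewrite FB; apply: (inv L j k _ Hk); [lia | by rewrite addnC].
have cov : forall t, t \in enum (Xs w n) -> exists L, t \in Fs w n L.
  move=> t; rewrite mem_enum => Ht; have [j ->] := XsP Ht.
  by exists j.+1; apply/mem_Fs; exists j.
have [L HL] := fin_cover cov.
rewrite p_Xs; apply: leq_trans (allL L).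
by apply/subset_leq_card/subsetP => t Ht; apply: HL; rewrite mem_enum.
Qed.

Lemma rep_condP (A : eqType) (w : nat -> A) n M :
  rep_cond w n M <-> (n < M /\ exists k, k < M - n /\ fac w k n = fac w (M - n) n).
Proof.
rewrite /rep_cond; split.
- case/andP => HM /hasP [i]; rewrite mem_iota => /andP [Hi1 Hi2] /eqP E.
  split; first by lia.
  by exists i.-1; split => //; lia.
- move=> [HnM [k [Hk E]]]; apply/andP; split; first by lia.
  apply/hasP; exists k.+1; first by rewrite mem_iota; lia.
  by rewrite /= E.
Qed.

Lemma rep_exists (A : finType) (w : nat -> A) n : exists M, rep_cond w n M.
Proof.
have [k [j [Hkj [_ E]]]] := @Fs_pigeon A w n #|{: n.-tuple A}|.+1 (max_card _).
exists (j + n); apply/rep_condP; split; first by lia.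
by exists k; rewrite addnK.
Qed.

Lemma r_spec (A : finType) (w : nat -> A) n :
  rep_cond w n (r w n) /\ forall M, rep_cond w n M -> r w n <= M.
Proof.
rewrite /r; case: excluded_middle_informative => [H|H].
- by case: (ex_minnP H) => m Hm Hmin.
- by exfalso; apply: H; apply: rep_exists.
Qed.

Lemma r_witness (A : finType) (w : nat -> A) m :
  exists k, k < r w m - m /\ fac w k m = fac w (r w m - m) m.
Proof. by have [/rep_condP [_ H] _] := r_spec w m. Qed.

Lemma r_le (A : finType) (w : nat -> A) n k j :
  k < j -> fac w k n = fac w j n -> r w n <= j + n.
Proof.
move=> Hkj E; have [_ H] := r_spec w n; apply: H; apply/rep_condP; split; first by lia.
by exists k; rewrite addnK.
Qed.

Lemma sturm_r (A : finType) (w : nat -> A) n : sturmian w -> 1 <= n -> r w n <= 2 * n + 1.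
Proof.
move=> S Hn.
have C : #|Fs w n (n + 2)| < n + 2.
  apply: leq_ltn_trans (subset_leq_card (Fs_Xs w n (n + 2))) _.
  by rewrite -p_Xs S // addn2.
have [k [j [Hkj [Hj E]]]] := Fs_pigeon C.
apply: leq_trans (r_le Hkj E) _; lia.
Qed.

Lemma sturm_inf (A : finType) (w : nat -> A) : sturmian w ->
  forall N, exists n, N <= n /\ 1 <= n /\ r w n = 2 * n + 1.
Proof.
move=> S N; apply: NNPP => Hno.
have Hle : forall m, N.+1 <= m -> exists j k, j <= m + 0 /\ k < j /\ fac w k m = fac w j m.
  move=> m Hm; have [k [Hk E]] := r_witness w m.
  exists (r w m - m), k; split => //.
  have H1 := sturm_r S (leq_trans (ltn0Sn _) Hm).
  have H2 : r w m <> 2 * m + 1 by move=> Heq; apply: Hno; exists m; split; [lia | split; [lia | done]].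
  lia.
have := p_bound Hle; rewrite S //; lia.
Qed.

Lemma ii_upper (A : finType) (w : nat -> A) n : 1 <= n ->
  (forall n, 1 <= n -> r w n <= 2 * n + 1) -> p w n <= n + 1.
Proof.
move=> Hn H; apply: p_bound => m Hm; have [k [Hk E]] := r_witness w m.
exists (r w m - m), k; split => //; have := H m (leq_trans Hn Hm); lia.
Qed.

Definition pre (A : finType) (w : nat -> A) k (t : k.+1.-tuple A) : k.-tuple A :=
  insubd [tuple of nseq k (w 0)] (take k t).

Lemma pre_tup (A : finType) (w : nat -> A) k j : pre w (tup w k.+1 j) = tup w k j.
Proof.
have T : take k (fac w j k.+1) = fac w j k.
  by rewrite /fac mkseqS -cats1 take_size_cat ?size_mkseq.
apply: val_inj; rewrite /pre val_insubd.
have -> : take k (tup w k.+1 j) = fac w j k by rewrite -T -val_tup.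
by rewrite val_tup size_mkseq eqxx.
Qed.

Lemma Xs_pre (A : finType) (w : nat -> A) k : Xs w k = (@pre A w k) @: Xs w k.+1.
Proof.
apply/setP => t; apply/idP/imsetP.
- move=> /XsP [j ->]; exists (tup w k.+1 j); first exact: Xs_tup.
  by rewrite pre_tup.
- move=> [t' /XsP [j ->] ->]; rewrite pre_tup; exact: Xs_tup.
Qed.

Lemma p_mono (A : finType) (w : nat -> A) k : p w k <= p w k.+1.
Proof. rewrite !p_Xs {1}Xs_pre; exact: leq_imset_card. Qed.

Lemma p_det (A : finType) (w : nat -> A) k : p w k.+1 <= p w k ->
  forall a b, fac w a k = fac w b k -> w (a + k) = w (b + k).
Proof.
move=> Hp a b E.
have inj : {in Xs w k.+1 &, injective (@pre A w k)}.
  apply/imset_injP; rewrite -Xs_pre eqn_leq -!p_Xs Hp andbT.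
  exact: p_mono.
have Ek : tup w k a = tup w k b by apply: val_inj; rewrite /= !val_tup.
have := inj _ _ (Xs_tup w k.+1 a) (Xs_tup w k.+1 b); rewrite !pre_tup => /(_ Ek) E1.
have /fac_eqP E2 : fac w a k.+1 = fac w b k.+1 by rewrite -!val_tup E1.
exact: E2.
Qed.

Lemma det_shift (A : finType) (w : nat -> A) k :
  (forall a b, fac w a k = fac w b k -> w (a + k) = w (b + k)) ->
  forall a b, fac w a k = fac w b k -> forall x, w (a + x) = w (b + x).
Proof.
move=> D a b E.
have Sh : forall y, fac w (a + y) k = fac w (b + y) k.
  elim => [|y IH]; first by rewrite !addn0.
  apply/fac_eqP => x Hx.
  case: (ltnP x.+1 k) => Hx1.
  - have := (proj1 (fac_eqP _ _ _ _) IH) x.+1 Hx1.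
    by rewrite !addnS !addSn.
  - have Ex : x.+1 = k by lia.
    have := D _ _ IH; rewrite -Ex !addnS !addSn; done.
move=> x; case: (ltnP x k) => Hx.
- by have := (proj1 (fac_eqP _ _ _ _) (Sh 0)) x Hx; rewrite !addn0.
- have := D _ _ (Sh (x - k)); rewrite -!addnA subnK //.
Qed.

Lemma p_low_det (A : finType) (w : nat -> A) n : p w n <= n ->
  exists k, k < n /\ p w k.+1 <= p w k.
Proof.
elim: n => [|n IH] Hp.
- exfalso; move: Hp; rewrite p_Xs leqn0 => /eqP /card0_eq /(_ (tup w 0 0)).
  by rewrite Xs_tup.
- case: (leqP (p w n.+1) (p w n)) => H; first by exists n.
  have [k [Hk Hk2]] := IH (ltnSE (leq_trans H Hp)).
  by exists k; split => //; apply: ltnW.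
Qed.

Lemma ii_lower (A : finType) (w : nat -> A) n :
  (forall N, exists n, N <= n /\ 1 <= n /\ r w n = 2 * n + 1) -> n.+1 <= p w n.
Proof.
move=> H; case: (leqP n.+1 (p w n)) => // Hlt.
have [k [_ Hk]] := p_low_det (ltnSE Hlt).
have D := p_det Hk.
have [k0 [j0 [Hkj [Hj E]]]] := @Fs_pigeon A w k #|{: k.-tuple A}|.+1 (max_card _).
have Sh := det_shift D E.
have [N [HN [HN1 Hr]]] := H #|{: k.-tuple A}|.+1.
have EN : fac w k0 N = fac w j0 N by apply/fac_eqP => x _; apply: Sh.
have := r_le Hkj EN; rewrite Hr; lia.
Qed.

Theorem theorem2p4 (A : finType) (w : nat -> A) :
  sturmian w <->
  ((forall n, 1 <= n -> r w n <= 2 * n + 1) /\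
   (forall N, exists n, N <= n /\ 1 <= n /\ r w n = 2 * n + 1)).
Proof.
split.
- move=> S; split; [move=> n; exact: sturm_r | exact: sturm_inf].
- move=> [H1 H2] n Hn; apply/eqP; rewrite eqn_leq.
  by rewrite (ii_lower n H2) andbT -addn1 ii_upper.
Qed.
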